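(* Let $f\in\mathcal{E}$ have infinite order and suppose $d(f^n)$ is bounded independently of $n$. Then there exists $N\in\mathbb{N}$ such that $d(f^{nN})$ is the same for all $n\in\mathbb{N}$.
   Context: Identify $\mathbb{T}^1=\mathbb{R}/\mathbb{Z}$ with $[0,1)$. An interval exchange transformation is a bijection of $\mathbb{T}^1$ that is a translation on each piece of some partition of $[0,1)$ into finitely many half-open intervals $[a,b)$; $\mathcal{E}$ is the group of these. $d(g)$ is the number of points at which $g$ is discontinuous as a map of the circle $\mathbb{T}^1$ with its standard topology. *)

(* Defs.v *)
From Stdlib Require Import Reals Lra List.
Open Scope R_scope.

(* The circle T^1 = R/Z is represented by [0,1); x mod 1 is frac_part. *)
Definition mod1 (x : R) : R := frac_part x.

Definition in01 (x : R) : Prop := 0 <= x < 1.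

Definition cdist (a b : R) : R :=
  Rmin (mod1 (a - b)) (1 - mod1 (a - b)).

(* A partition 0 = a_0 < a_1 < ... < a_k = 1 of [0,1), given as the list of
   breakpoints [a_0; ...; a_k], together with translation amounts t_i. *)
Fixpoint strictly_increasing (l : list R) : Prop :=
  match l with
  | a :: ((b :: _) as l') => a < b /\ strictly_increasing l'
  | _ => True
  end.

Definition piecewise_translation (g : R -> R) (pts ts : list R) : Prop :=
  length pts = S (length ts) /\
  hd 0 pts = 0 /\ last pts 0 = 1 /\ strictly_increasing pts /\
  forall i x, (i < length ts)%nat ->
    nth i pts 0 <= x < nth (S i) pts 0 ->
    g x = mod1 (x + nth i ts 0).

Definition bij01 (g : R -> R) : Prop :=
  (forall x, in01 x -> in01 (g x)) /\
  (forall x y, in01 x -> in01 y -> g x = g y -> x = y) /\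
  (forall y, in01 y -> exists x, in01 x /\ g x = y).

(* The group E of interval exchange transformations (only the values on
   [0,1) are relevant). *)
Definition IET (g : R -> R) : Prop :=
  bij01 g /\ exists pts ts, piecewise_translation g pts ts.

Definition iter (n : nat) (g : R -> R) : R -> R := Nat.iter n g.

Definition circle_continuous_at (g : R -> R) (x : R) : Prop :=
  forall eps, 0 < eps -> exists delta, 0 < delta /\
    forall y, in01 y -> cdist x y < delta -> cdist (g x) (g y) < eps.

Definition disc_count (g : R -> R) (n : nat) : Prop :=
  exists l : list R, NoDup l /\ length l = n /\
    forall x, In x l <-> (in01 x /\ ~ circle_continuous_at g x).

Definition infinite_order (f : R -> R) : Prop :=
  forall n : nat, (1 <= n)%nat -> exists x, in01 x /\ iter n f x <> x.

(* Main.v *)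
From Stdlib Require Import Reals Lra Lia List ZArith Classical ClassicalEpsilon.
Require Import Defs.
Open Scope R_scope.

Lemma mod1_rng z : 0 <= mod1 z < 1.
Proof. unfold mod1. destruct (base_fp z); lra. Qed.

Lemma mod1_dec z : exists k, z = mod1 z + IZR k.
Proof. unfold mod1, frac_part. exists (Int_part z). ring. Qed.

Lemma mod1_uniq y z k : 0 <= y < 1 -> z = y + IZR k -> mod1 z = y.
Proof.
  intros Hy Hz. unfold mod1, frac_part, Int_part.
  assert (E : (k + 1)%Z = up z).
  { apply tech_up; rewrite plus_IZR; simpl; lra. }
  rewrite <- E. replace (k + 1 - 1)%Z with k by ring. lra.
Qed.

Lemma mod1_id y : 0 <= y < 1 -> mod1 y = y.
Proof. intros H. apply (mod1_uniq y y 0); auto. simpl; ring. Qed.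

Lemma mod1_shift z1 z2 k : z1 = z2 + IZR k -> mod1 z1 = mod1 z2.
Proof.
  intros H. destruct (mod1_dec z2) as [j Hj].
  apply (mod1_uniq _ _ (j + k)). apply mod1_rng. rewrite plus_IZR. lra.
Qed.

Lemma mod1_mod1 a b : mod1 (mod1 a + b) = mod1 (a + b).
Proof.
  destruct (mod1_dec a) as [j Hj]. apply (mod1_shift _ _ (-j)).
  rewrite opp_IZR. lra.
Qed.

Lemma cdist_le a b k : cdist a b <= Rabs (a - b - IZR k).
Proof.
  unfold cdist. destruct (mod1_dec (a - b)) as [j Hj].
  pose proof (mod1_rng (a - b)).
  set (m := mod1 (a - b)) in *.
  replace (a - b - IZR k) with (m + IZR (j - k)) by (rewrite minus_IZR; lra).
  destruct (Z.le_gt_cases 0 (j - k)) as [Hz|Hz].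
  - apply IZR_le in Hz. rewrite Rabs_right by lra.
    apply Rle_trans with m; [apply Rmin_l | lra].
  - assert (IZR (j - k) <= -1) by (apply IZR_le; lia).
    rewrite Rabs_left by lra.
    apply Rle_trans with (1 - m); [apply Rmin_r | lra].
Qed.

Lemma cdist_attain a b : exists k, cdist a b = Rabs (a - b - IZR k).
Proof.
  unfold cdist. destruct (mod1_dec (a - b)) as [j Hj].
  pose proof (mod1_rng (a - b)).
  set (m := mod1 (a - b)) in *.
  destruct (Rle_dec m (1 - m)).
  - exists j. rewrite Rmin_left by lra. rewrite Rabs_right; lra.
  - exists (j + 1)%Z. rewrite Rmin_right by lra. rewrite plus_IZR.
    rewrite Rabs_left; simpl; lra.
Qed.

Lemma cdist_tri a b c : cdist a c <= cdist a b + cdist b c.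
Proof.
  destruct (cdist_attain a b) as [k1 H1]. destruct (cdist_attain b c) as [k2 H2].
  rewrite H1, H2. eapply Rle_trans. apply (cdist_le a c (k1 + k2)).
  rewrite plus_IZR.
  replace (a - c - (IZR k1 + IZR k2)) with ((a - b - IZR k1) + (b - c - IZR k2)) by ring.
  apply Rabs_triang.
Qed.

Lemma cdist_pos a b : 0 <= cdist a b.
Proof. destruct (cdist_attain a b) as [k H]. rewrite H. apply Rabs_pos. Qed.

Lemma cdist_0 a b : in01 a -> in01 b -> cdist a b = 0 -> a = b.
Proof.
  intros Ha Hb H. destruct (cdist_attain a b) as [k Hk]. rewrite Hk in H.
  assert (a - b - IZR k = 0).
  { destruct (Rcase_abs (a - b - IZR k)) as [Hl|Hl].
    - rewrite (Rabs_left _ Hl) in H. lra.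
    - rewrite (Rabs_right _ Hl) in H. lra. }
  rewrite <- (mod1_id a Ha). apply (mod1_uniq b a k). exact Hb. lra.
Qed.

Lemma cdist_plus a h : cdist a (mod1 (a + h)) <= Rabs h.
Proof.
  destruct (mod1_dec (a + h)) as [j Hj].
  eapply Rle_trans. apply (cdist_le _ _ j).
  replace (a - mod1 (a + h) - IZR j) with (- h) by lra. rewrite Rabs_Ropp. lra.
Qed.

Lemma cdist_sym a b : cdist a b = cdist b a.
Proof.
  apply Rle_antisym.
  - destruct (cdist_attain b a) as [k Hk]; rewrite Hk.
    eapply Rle_trans. apply (cdist_le a b (-k)). rewrite opp_IZR.
    replace (a - b - - IZR k) with (- (b - a - IZR k)) by ring. rewrite Rabs_Ropp; lra.
  - destruct (cdist_attain a b) as [k Hk]; rewrite Hk.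
    eapply Rle_trans. apply (cdist_le b a (-k)). rewrite opp_IZR.
    replace (b - a - - IZR k) with (- (a - b - IZR k)) by ring. rewrite Rabs_Ropp; lra.
Qed.

Definition rgerm (g : R -> R) (x : R) : Prop :=
  exists d, 0 < d /\ forall h, 0 <= h < d -> g (mod1 (x + h)) = mod1 (g x + h).
Definition lgerm (g : R -> R) (x v : R) : Prop :=
  exists d, 0 < d /\ forall h, 0 < h < d -> g (mod1 (x - h)) = mod1 (v - h).

Lemma near_pt x y d : in01 y -> cdist x y < d ->
  exists s, Rabs s < d /\ y = mod1 (x - s).
Proof.
  intros Hy H. destruct (cdist_attain x y) as [k Hk].
  exists (x - y - IZR k). split. lra.
  symmetry. apply (mod1_uniq _ _ k). exact Hy. ring.
Qed.

Lemma cont_iff g x v : in01 x -> in01 (g x) -> in01 v -> rgerm g x -> lgerm g x v ->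
  (circle_continuous_at g x <-> v = g x).
Proof.
  intros Hx Hgx Hv [d1 [Hd1 R1]] [d2 [Hd2 L2]]. split.
  - intros Hc. destruct (classic (v = g x)) as [E|NE]; auto. exfalso.
    set (d := cdist (g x) v).
    assert (Hd : 0 < d).
    { pose proof (cdist_pos (g x) v). destruct (Req_dec d 0) as [E0|E0].
      - exfalso. apply NE. symmetry. apply cdist_0; auto.
      - unfold d in *; lra. }
    destruct (Hc (d/2)) as [de [Hde Hc2]]. lra.
    set (h := Rmin (Rmin de d2) d / 2).
    assert (Hh1 : 0 < h).
    { unfold h. assert (0 < Rmin (Rmin de d2) d) by (apply Rmin_pos; [apply Rmin_pos|]; lra). lra. }
    assert (Hh2 : h < de /\ h < d2 /\ h <= d / 2).
    { unfold h. pose proof (Rmin_l (Rmin de d2) d). pose proof (Rmin_r (Rmin de d2) d).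
      pose proof (Rmin_l de d2). pose proof (Rmin_r de d2). lra. }
    assert (Hy : in01 (mod1 (x - h))) by apply mod1_rng.
    assert (Hxy : cdist x (mod1 (x - h)) < de).
    { pose proof (cdist_plus x (- h)). unfold Rminus.
      rewrite Rabs_Ropp, Rabs_right in H by lra. lra. }
    specialize (Hc2 _ Hy Hxy). rewrite L2 in Hc2 by lra.
    pose proof (cdist_tri (g x) (mod1 (v - h)) v).
    pose proof (cdist_plus v (- h)). rewrite Rabs_Ropp, Rabs_right in H0 by lra.
    rewrite (cdist_sym (mod1 (v - h)) v) in H. unfold Rminus in *. fold d in H. lra.
  - intros E eps Heps. exists (Rmin (Rmin d1 d2) eps).
    pose proof (Rmin_l (Rmin d1 d2) eps). pose proof (Rmin_r (Rmin d1 d2) eps).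
    pose proof (Rmin_l d1 d2). pose proof (Rmin_r d1 d2).
    split. apply Rmin_pos; [apply Rmin_pos|]; lra.
    intros y Hy Hxy. destruct (near_pt x y _ Hy Hxy) as [s [Hs Ey]].
    destruct (Rle_dec s 0) as [Hs0|Hs0].
    + rewrite Rabs_left1 in Hs by lra.
      replace (x - s) with (x + - s) in Ey by ring. rewrite Ey, R1 by lra.
      eapply Rle_lt_trans. apply cdist_plus. rewrite Rabs_right; lra.
    + rewrite Rabs_right in Hs by lra. rewrite Ey, L2 by lra. rewrite E.
      eapply Rle_lt_trans. apply cdist_plus. rewrite Rabs_Ropp, Rabs_right; lra.
Qed.

Lemma piece_r l x : strictly_increasing l -> hd 0 l <= x < last l 0 ->
  exists i, (S i < length l)%nat /\ nth i l 0 <= x < nth (S i) l 0.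
Proof.
  induction l as [|a l IH]; simpl; intros Hs Hx. lra.
  destruct l as [|b l']. lra.
  destruct Hs as [Hab Hs].
  destruct (Rlt_dec x b).
  - exists 0%nat. simpl. split. lia. lra.
  - destruct (IH Hs) as [i [Hi Hx']]. simpl. split. lra. exact (proj2 Hx).
    exists (S i). simpl in *. split. lia. exact Hx'.
Qed.

Lemma piece_l l x : strictly_increasing l -> hd 0 l < x <= last l 0 ->
  exists i, (S i < length l)%nat /\ nth i l 0 < x <= nth (S i) l 0.
Proof.
  induction l as [|a l IH]; simpl; intros Hs Hx. lra.
  destruct l as [|b l']. lra.
  destruct Hs as [Hab Hs].
  destruct (Rle_dec x b).
  - exists 0%nat. simpl. split. lia. lra.
  - destruct (IH Hs) as [i [Hi Hx']]. simpl. split. lra. exact (proj2 Hx).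
    exists (S i). simpl in *. split. lia. exact Hx'.
Qed.

Lemma f_rgerm f pts ts u : piecewise_translation f pts ts -> in01 u -> rgerm f u.
Proof.
  intros [Hlen [Hhd [Hlast [Hsi Hf]]]] Hu. unfold in01 in Hu.
  destruct (piece_r pts u Hsi) as [i [Hi Hp]]. rewrite Hhd, Hlast. lra.
  exists (Rmin (nth (S i) pts 0 - u) (1 - u)). split.
  apply Rmin_pos; lra.
  intros h Hh. pose proof (Rmin_l (nth (S i) pts 0 - u) (1 - u)).
  pose proof (Rmin_r (nth (S i) pts 0 - u) (1 - u)).
  rewrite (mod1_id (u + h)) by lra.
  rewrite (Hf i (u + h)) by (lia || lra). rewrite (Hf i u) by (lia || lra).
  rewrite mod1_mod1. f_equal. ring.
Qed.

Lemma f_lgerm f pts ts u : piecewise_translation f pts ts -> in01 u ->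
  exists v, in01 v /\ lgerm f u v /\ (v <> f u -> In u pts).
Proof.
  intros [Hlen [Hhd [Hlast [Hsi Hf]]]] Hu. unfold in01 in Hu.
  set (u' := if Rlt_dec 0 u then u else 1).
  assert (Hu' : 0 < u' <= 1 /\ (u' = u \/ (u = 0 /\ u' = 1))).
  { unfold u'. destruct (Rlt_dec 0 u).
    - split. lra. left; auto.
    - split. lra. right; lra. }
  destruct (piece_l pts u' Hsi) as [i [Hi Hp]]. rewrite Hhd, Hlast. lra.
  exists (mod1 (u' + nth i ts 0)). split. apply mod1_rng. split.
  - exists (Rmin (u' - nth i pts 0) u'). split. apply Rmin_pos; lra.
    intros h Hh. pose proof (Rmin_l (u' - nth i pts 0) u').
    pose proof (Rmin_r (u' - nth i pts 0) u').
    assert (E : mod1 (u - h) = u' - h).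
    { apply (mod1_uniq _ _ (if Rlt_dec 0 u then 0 else -1)%Z).
      - lra.
      - unfold u' in *. destruct (Rlt_dec 0 u); simpl; lra. }
    rewrite E. rewrite (Hf i (u' - h)) by (lia || lra).
    unfold Rminus. rewrite mod1_mod1. f_equal. ring.
  - intros Hne. destruct Hu' as [_ [Eu|[Eu _]]].
    + destruct (Req_dec u (nth (S i) pts 0)) as [E|E].
      * rewrite E. apply nth_In. lia.
      * exfalso. apply Hne. rewrite (Hf i u) by (lia || lra). rewrite Eu. reflexivity.
    + subst u. destruct pts; simpl in *. lia. left; auto.
Qed.

Lemma tau_exists f : IET f -> exists (tau : R -> R) (L : list R),
  (forall u, in01 u -> in01 (tau u)) /\
  (forall u, in01 u -> lgerm f u (tau u)) /\
  (forall u, in01 u -> tau u <> f u -> In u L) /\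
  (forall u, in01 u -> rgerm f u).
Proof.
  intros [Hb [pts [ts Hp]]].
  exists (fun u => epsilon (inhabits 0) (fun v => in01 v /\ lgerm f u v /\ (v <> f u -> In u pts))).
  exists pts.
  assert (S : forall u, in01 u -> let v := epsilon (inhabits 0) (fun v => in01 v /\ lgerm f u v /\ (v <> f u -> In u pts)) in
     in01 v /\ lgerm f u v /\ (v <> f u -> In u pts)).
  { intros u Hu. apply epsilon_spec. apply (f_lgerm f pts ts u Hp Hu). }
  split; [|split; [|split]]; intros u Hu; try apply (S u Hu).
  apply (f_rgerm f pts ts u Hp Hu).
Qed.

Lemma iter_in f n x : (forall u, in01 u -> in01 (f u)) -> in01 x -> in01 (iter n f x).
Proof. intros H Hx. induction n; simpl; auto. Qed.

Lemma iter_germs f tau n x :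
  (forall u, in01 u -> in01 (f u)) ->
  (forall u, in01 u -> in01 (tau u)) ->
  (forall u, in01 u -> lgerm f u (tau u)) ->
  (forall u, in01 u -> rgerm f u) ->
  in01 x -> rgerm (iter n f) x /\ lgerm (iter n f) x (iter n tau x).
Proof.
  intros Hf Ht Hl Hr Hx. induction n as [|n [[d1 [Hd1 R1]] [d2 [Hd2 L2]]]].
  - split; exists 1; split; try lra; intros h Hh; simpl; reflexivity.
  - split.
    + destruct (Hr (iter n f x) (iter_in f n x Hf Hx)) as [e [He Re]].
      exists (Rmin d1 e). split. apply Rmin_pos; lra.
      intros h Hh. pose proof (Rmin_l d1 e). pose proof (Rmin_r d1 e).
      change (f (iter n f (mod1 (x + h))) = mod1 (f (iter n f x) + h)).
      rewrite R1 by lra. apply Re. lra.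
    + destruct (Hl (iter n tau x) (iter_in tau n x Ht Hx)) as [e [He Le]].
      exists (Rmin d2 e). split. apply Rmin_pos; lra.
      intros h Hh. pose proof (Rmin_l d2 e). pose proof (Rmin_r d2 e).
      change (f (iter n f (mod1 (x - h))) = mod1 (tau (iter n tau x) - h)).
      rewrite L2 by lra. apply Le. lra.
Qed.

Lemma disc_iff f tau n x :
  (forall u, in01 u -> in01 (f u)) ->
  (forall u, in01 u -> in01 (tau u)) ->
  (forall u, in01 u -> lgerm f u (tau u)) ->
  (forall u, in01 u -> rgerm f u) ->
  in01 x -> (circle_continuous_at (iter n f) x <-> iter n f x = iter n tau x).
Proof.
  intros Hf Ht Hl Hr Hx. destruct (iter_germs f tau n x Hf Ht Hl Hr Hx) as [G1 G2].
  rewrite (cont_iff (iter n f) x (iter n tau x)); auto.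
  split; intros; congruence.
  apply iter_in; auto. apply iter_in; auto.
Qed.

Record Sys (s t : R -> R) (L : list R) : Prop := {
  s_in : forall u, in01 u -> in01 (s u);
  t_in : forall u, in01 u -> in01 (t u);
  s_inj : forall x y, in01 x -> in01 y -> s x = s y -> x = y;
  s_surj : forall y, in01 y -> exists x, in01 x /\ s x = y;
  E_fin : forall u, in01 u -> s u <> t u -> In u L }.

Definition Ev (s t : R -> R) (u : R) : Prop := in01 u /\ s u <> t u.
Definition Ap (s t : R -> R) (x : R) (n : nat) : Prop := iter n s x <> iter n t x.
Definition sinv (s : R -> R) (y : R) : R := epsilon (inhabits 0) (fun x => in01 x /\ s x = y).

Lemma least_ex (P : nat -> Prop) : (exists n, P n) -> exists n, P n /\ forall m, (m < n)%nat -> ~ P m.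
Proof.
  intros [n Hn]. revert Hn. induction n as [n IH] using lt_wf_ind. intros Hn.
  destruct (classic (exists m, (m < n)%nat /\ P m)) as [[m [Hm Pm]]|H].
  - exact (IH m Hm Pm).
  - exists n. split; auto. intros m Hm Pm. apply H. eauto.
Qed.

Lemma iter_add' (g : R -> R) p q x : iter (p + q) g x = iter p g (iter q g x).
Proof. unfold iter. apply Nat.iter_add. Qed.

Lemma iter_S' (g : R -> R) n x : iter (S n) g x = g (iter n g x).
Proof. reflexivity. Qed.


Lemma iter_Sr (g : R -> R) n x : iter (S n) g x = iter n g (g x).
Proof. unfold iter. apply Nat.iter_succ_r. Qed.

Lemma iter_in' (g : R -> R) n x : (forall u, in01 u -> in01 (g u)) -> in01 x -> in01 (iter n g x).
Proof. intros H Hx. induction n; simpl; auto. Qed.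

Lemma together s t L x k : Sys s t L -> in01 x ->
  (forall i, (i < k)%nat -> ~ Ev s t (iter i s x)) -> iter k s x = iter k t x.
Proof.
  intros HS Hx H. induction k. reflexivity.
  rewrite !iter_S'. rewrite <- IHk by (intros; apply H; lia).
  assert (Hi := iter_in' s k x (s_in _ _ _ HS) Hx).
  destruct (classic (s (iter k s x) = t (iter k s x))) as [E|E]; auto.
  exfalso. apply (H k). lia. split; auto.
Qed.

Lemma sinv_spec s t L y : Sys s t L -> in01 y -> in01 (sinv s y) /\ s (sinv s y) = y.
Proof. intros HS Hy. unfold sinv. apply epsilon_spec. apply (s_surj _ _ _ HS y Hy). Qed.

Lemma sinv_s s t L x : Sys s t L -> in01 x -> sinv s (s x) = x.
Proof.
  intros HS Hx. destruct (sinv_spec s t L (s x) HS (s_in _ _ _ HS x Hx)) as [H1 H2].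
  apply (s_inj _ _ _ HS); auto.
Qed.

Lemma sinv_in s t L : Sys s t L -> forall u, in01 u -> in01 (sinv s u).
Proof. intros HS u Hu. apply (sinv_spec s t L u HS Hu). Qed.

Lemma iter_s_sinv s t L k y : Sys s t L -> in01 y -> iter k s (iter k (sinv s) y) = y.
Proof.
  intros HS Hy. induction k. reflexivity.
  rewrite (iter_S' (sinv s)), iter_Sr.
  rewrite (proj2 (sinv_spec s t L _ HS (iter_in' _ k y (sinv_in s t L HS) Hy))). exact IHk.
Qed.

Lemma iter_sinv_s s t L k x : Sys s t L -> in01 x -> iter k (sinv s) (iter k s x) = x.
Proof.
  intros HS Hx. induction k. reflexivity.
  rewrite (iter_S' s), iter_Sr.
  rewrite (sinv_s s t L _ HS (iter_in' _ k x (s_in _ _ _ HS) Hx)). exact IHk.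
Qed.

Lemma iter_s_sinv_le s t L i k y : Sys s t L -> in01 y -> (i <= k)%nat ->
  iter i s (iter k (sinv s) y) = iter (k - i) (sinv s) y.
Proof.
  intros HS Hy Hik. replace k with (i + (k - i))%nat at 1 by lia.
  rewrite iter_add'. apply (iter_s_sinv s t L); auto.
  apply iter_in'; auto. apply (sinv_in s t L HS).
Qed.

Definition hit s t x k e : Prop :=
  iter k s x = e /\ Ev s t e /\ forall i, (i < k)%nat -> ~ Ev s t (iter i s x).

Lemma hit_unique s t x k e k' e' : hit s t x k e -> hit s t x k' e' -> k = k' /\ e = e'.
Proof.
  intros [H1 [H2 H3]] [H1' [H2' H3']].
  assert (k = k').
  { destruct (Nat.lt_total k k') as [l|[l|l]]; auto.
    - exfalso. apply (H3' k l). rewrite H1; auto.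
    - exfalso. apply (H3 k' l). rewrite H1'; auto. }
  subst. split; congruence.
Qed.

Lemma A_hit s t L x n : Sys s t L -> in01 x -> Ap s t x n ->
  exists k e, (k < n)%nat /\ hit s t x k e.
Proof.
  intros HS Hx HA.
  destruct (classic (exists i, (i < n)%nat /\ Ev s t (iter i s x))) as [Hex|Hno].
  - destruct (least_ex (fun i => (i < n)%nat /\ Ev s t (iter i s x)) Hex) as [k [[Hk HE] Hl]].
    exists k, (iter k s x). split; auto. split; auto. split; auto.
    intros i Hi HEi. apply (Hl i Hi). split; auto. lia.
  - exfalso. apply HA. apply (together s t L); auto.
    intros i Hi HE. apply Hno. eauto.
Qed.

Lemma A_via_hit s t L x k e n : Sys s t L -> in01 x -> hit s t x k e -> (k <= n)%nat ->
  (Ap s t x n <-> Ap s t e (n - k)).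
Proof.
  intros HS Hx [H1 [H2 H3]] Hkn. unfold Ap.
  replace n with ((n - k) + k)%nat at 1 2 by lia.
  rewrite !iter_add'. rewrite <- (together s t L x k HS Hx H3). rewrite H1. tauto.
Qed.

Definition run_inf s t e : Prop := forall i, (1 <= i)%nat -> ~ Ev s t (iter i (sinv s) e).

Lemma hit_x s t L x k e : Sys s t L -> in01 x -> hit s t x k e -> x = iter k (sinv s) e.
Proof.
  intros HS Hx [H1 _]. rewrite <- H1. symmetry. apply (iter_sinv_s s t L); auto.
Qed.

Lemma hit_bound s t L x k e i : Sys s t L -> in01 x -> hit s t x k e ->
  (1 <= i)%nat -> Ev s t (iter i (sinv s) e) -> (k < i)%nat.
Proof.
  intros HS Hx Hh Hi HE. destruct (Nat.lt_ge_cases k i) as [l|l]; auto. exfalso.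
  pose proof (hit_x s t L x k e HS Hx Hh) as Ex. destruct Hh as [H1 [H2 H3]].
  apply (H3 (k - i)%nat). lia.
  rewrite Ex. rewrite (iter_s_sinv_le s t L) by (auto; apply H2 || lia).
  replace (k - (k - i))%nat with i by lia. exact HE.
Qed.

Lemma hit_of_backrun s t L e k : Sys s t L -> Ev s t e ->
  (forall j, (1 <= j <= k)%nat -> ~ Ev s t (iter j (sinv s) e)) ->
  hit s t (iter k (sinv s) e) k e.
Proof.
  intros HS HE Hr. split; [|split]; auto.
  - apply (iter_s_sinv s t L); auto. apply HE.
  - intros i Hi. rewrite (iter_s_sinv_le s t L) by (auto; apply HE || lia).
    apply Hr. lia.
Qed.

Definition EP s t e : Prop :=
  exists K P, (1 <= P)%nat /\ forall k, (K <= k)%nat -> (Ap s t e (k + P) <-> Ap s t e k).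
Definition Sh s t e e' w : Prop := forall k, Ap s t e (k + w) <-> Ap s t e' k.

Lemma Sh_EP s t e e' w : Sh s t e e' w -> EP s t e' -> EP s t e.
Proof.
  intros HS [K [P [HP H]]]. unfold Sh in HS. exists (K + w)%nat, P. split; auto. intros k Hk.
  replace k with ((k - w) + w)%nat by lia.
  replace ((k - w) + w + P)%nat with ((k - w + P) + w)%nat by lia.
  rewrite !HS. apply H. lia.
Qed.

Lemma Sh_trans s t e1 e2 e3 w1 w2 : Sh s t e1 e2 w1 -> Sh s t e2 e3 w2 -> Sh s t e1 e3 (w1 + w2).
Proof.
  unfold Sh. intros H1 H2 k. replace (k + (w1 + w2))%nat with ((k + w2) + w1)%nat by lia.
  rewrite H1. apply H2.
Qed.

Lemma Sh_cycle s t e W : (1 <= W)%nat -> Sh s t e e W -> EP s t e.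
Proof. intros HW H. exists 0%nat, W. split; auto. Qed.

Lemma step s t L e : Sys s t L -> in01 e ->
  EP s t e \/ exists e' w, Ev s t e' /\ (1 <= w)%nat /\ Sh s t e e' w.
Proof.
  intros HS He.
  destruct (classic (exists z, (1 <= z)%nat /\ iter z s e = iter z t e)) as [[z [Hz Ez]]|Hno].
  2:{ left. exists 1%nat, 1%nat. split; auto. intros k Hk. unfold Ap. split; intros _ E.
      - apply Hno. exists k. split. lia. exact E.
      - apply Hno. exists (k + 1)%nat. split. lia. exact E. }
  set (y := iter z s e).
  assert (Hy : in01 y) by (apply iter_in'; auto; apply (s_in _ _ _ HS)).
  destruct (classic (exists h, Ev s t (iter h s y))) as [Hex|Hno].
  - right. destruct (least_ex _ Hex) as [h [Hh Hl]].
    exists (iter h s y), (h + z)%nat. split; auto. split. lia.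
    intros k. unfold Ap. rewrite !iter_add'. fold y. rewrite <- Ez. fold y.
    rewrite (together s t L y h HS Hy Hl). tauto.
  - left. exists z, 1%nat. split; auto. intros k Hk.
    assert (Z : forall m, (z <= m)%nat -> ~ Ap s t e m).
    { intros m Hm. unfold Ap. replace m with ((m - z) + z)%nat by lia.
      rewrite !iter_add'. fold y. rewrite <- Ez. fold y.
      rewrite (together s t L y (m - z) HS Hy). tauto.
      intros i _ HE. apply Hno. eauto. }
    split; intros H; exfalso; [apply (Z (k + 1)%nat)|apply (Z k)]; auto; lia.
Qed.

Lemma nodup_map_seq (g : nat -> R) a m :
  (forall i j, (a <= i < a + m)%nat -> (a <= j < a + m)%nat -> g i = g j -> i = j) ->
  NoDup (map g (seq a m)).
Proof.
  revert a. induction m; intros a H; simpl. constructor.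
  constructor.
  - intros Hin. apply in_map_iff in Hin. destruct Hin as [j [Ej Hj]].
    apply in_seq in Hj. assert (j = a) by (apply H; lia || auto). lia.
  - apply IHm. intros i j Hi Hj E. apply H; auto; lia.
Qed.

Lemma pigeon (g : nat -> R) (L : list R) : (forall i, In (g i) L) ->
  exists i j, (i < j)%nat /\ g i = g j.
Proof.
  intros H. apply NNPP. intros Hn.
  assert (ND : NoDup (map g (seq 0 (S (length L))))).
  { apply nodup_map_seq. intros i j _ _ E.
    destruct (Nat.lt_total i j) as [l|[l|l]]; auto; exfalso; apply Hn; eauto. }
  apply NoDup_incl_length with (l' := L) in ND.
  - rewrite length_map, length_seq in ND. lia.
  - intros x Hx. apply in_map_iff in Hx. destruct Hx as [i [<- _]]. auto.
Qed.

Lemma all_EP s t L : Sys s t L -> forall e, Ev s t e -> EP s t e.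
Proof.
  intros HS u Hu. apply NNPP. intros Hn.
  set (U := fun x => Ev s t x /\ ~ EP s t x).
  assert (Hsucc : forall x, U x -> exists x', U x' /\ exists w, (1 <= w)%nat /\ Sh s t x x' w).
  { intros x [Hx Hnx]. destruct (step s t L x HS (proj1 Hx)) as [H|[e' [w [He' [Hw Hsh]]]]].
    - contradiction.
    - exists e'. split. split; auto. intros He. apply Hnx. eapply Sh_EP; eauto. eauto. }
  set (nxt := fun x => epsilon (inhabits 0) (fun x' => U x' /\ exists w, (1 <= w)%nat /\ Sh s t x x' w)).
  assert (Hn1 : forall x, U x -> U (nxt x) /\ exists w, (1 <= w)%nat /\ Sh s t x (nxt x) w).
  { intros x Hx. unfold nxt. apply epsilon_spec. auto. }
  set (g := fun i => iter i nxt u).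
  assert (HU : forall i, U (g i)).
  { intros i. unfold g. induction i. split; auto. rewrite iter_S'. apply Hn1; auto. }
  assert (Hch : forall i d, (1 <= d)%nat -> exists W, (1 <= W)%nat /\ Sh s t (g i) (g (i + d)%nat) W).
  { intros i d Hd. induction d. lia.
    destruct (Nat.eq_dec d 0) as [->|Hd0].
    - replace (i + 1)%nat with (S i) by lia. unfold g. rewrite iter_S'. apply Hn1. apply HU.
    - destruct IHd as [W [HW Hs]]. lia.
      destruct (proj2 (Hn1 _ (HU (i + d)%nat))) as [w [Hw Hs2]].
      exists (W + w)%nat. split. lia.
      replace (i + S d)%nat with (S (i + d)) by lia. unfold g at 2. rewrite iter_S'.
      eapply Sh_trans. apply Hs. apply Hs2. }
  destruct (pigeon g L) as [i [j [Hij Eij]]].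
  { intros i. apply (E_fin _ _ _ HS). apply (HU i). apply (HU i). }
  destruct (Hch i (j - i)%nat) as [W [HW Hs]]. lia.
  replace (i + (j - i))%nat with j in Hs by lia. rewrite <- Eij in Hs.
  apply (proj2 (HU i)). eapply Sh_cycle; eauto.
Qed.

Lemma EP_iter s t e K P : (forall k, (K <= k)%nat -> (Ap s t e (k + P) <-> Ap s t e k)) ->
  forall j k, (K <= k)%nat -> (Ap s t e (k + j * P) <-> Ap s t e k).
Proof.
  intros H j. induction j; intros k Hk. simpl. rewrite Nat.add_0_r. tauto.
  replace (k + S j * P)%nat with ((k + j * P) + P)%nat by lia.
  rewrite H by lia. apply IHj; auto.
Qed.

Lemma common_period s t L : Sys s t L -> exists K P, (1 <= P)%nat /\
  forall e, Ev s t e -> forall j k, (K <= k)%nat -> (Ap s t e (k + j * P) <-> Ap s t e k).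
Proof.
  intros HS.
  assert (G : forall L', exists K P, (1 <= P)%nat /\
    forall e, In e L' -> Ev s t e -> forall j k, (K <= k)%nat -> (Ap s t e (k + j * P) <-> Ap s t e k)).
  { induction L' as [|a L' IH].
    - exists 0%nat, 1%nat. split; auto. intros e [].
    - destruct IH as [K [P [HP H]]].
      destruct (classic (Ev s t a)) as [Ha|Ha].
      + destruct (all_EP s t L HS a Ha) as [Ka [Pa [HPa Ha2]]].
        exists (Nat.max K Ka), (Pa * P)%nat. split. nia.
        intros e [<-|He] HE j k Hk.
        * replace (j * (Pa * P))%nat with ((j * P) * Pa)%nat by ring.
          apply (EP_iter s t a Ka Pa Ha2). lia.
        * replace (j * (Pa * P))%nat with ((j * Pa) * P)%nat by ring.
          apply H; auto. lia.
      + exists K, P. split; auto. intros e [<-|He] HE; [contradiction|]. auto. }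
  destruct (G L) as [K [P [HP H]]]. exists K, P. split; auto.
  intros e He. apply H; auto. apply (E_fin _ _ _ HS). apply He. apply He.
Qed.

Lemma Lmax_ex s t L : Sys s t L -> exists Lm, forall e, Ev s t e -> ~ run_inf s t e ->
  exists i, (1 <= i <= Lm)%nat /\ Ev s t (iter i (sinv s) e).
Proof.
  intros HS.
  assert (G : forall L', exists Lm, forall e, In e L' -> ~ run_inf s t e ->
    exists i, (1 <= i <= Lm)%nat /\ Ev s t (iter i (sinv s) e)).
  { induction L' as [|a L' IH].
    - exists 0%nat. intros e [].
    - destruct IH as [Lm H].
      destruct (classic (run_inf s t a)) as [Ha|Ha].
      + exists Lm. intros e [<-|He] Hr; [contradiction|]. auto.
      + unfold run_inf in Ha. apply not_all_ex_not in Ha. destruct Ha as [i Hi].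
        apply imply_to_and in Hi. destruct Hi as [Hi1 Hi2]. apply NNPP in Hi2.
        exists (Nat.max Lm i). intros e [<-|He] Hr.
        * exists i. split; auto. lia.
        * destruct (H e He Hr) as [i' [Hi' Hi'2]]. exists i'. split; auto. lia. }
  destruct (G L) as [Lm H]. exists Lm. intros e He. apply H.
  apply (E_fin _ _ _ HS). apply He. apply He.
Qed.

Definition Bnd s t B : Prop := forall n, exists l, NoDup l /\ (length l <= B)%nat /\
  forall x, in01 x -> Ap s t x n -> In x l.

Lemma ev_zero s t L B K P e : Sys s t L -> Bnd s t B -> (1 <= P)%nat -> Ev s t e -> run_inf s t e ->
  (forall j k, (K <= k)%nat -> (Ap s t e (k + j * P) <-> Ap s t e k)) ->
  forall k, (K <= k)%nat -> ~ Ap s t e k.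
Proof.
  intros HS HB HP He Hr Hper k0 Hk0 HA.
  set (n := (k0 + B * P)%nat).
  set (xf := fun j : nat => iter (B * P - j * P) (sinv s) e).
  destruct (HB n) as [l [Hnd [Hlen Hin]]].
  assert (Hhit : forall j, hit s t (xf j) (B * P - j * P) e).
  { intros j. apply (hit_of_backrun s t L); auto. intros i Hi. apply Hr. lia. }
  assert (Hxin : forall j, in01 (xf j)).
  { intros j. apply iter_in'. apply (sinv_in s t L HS). apply He. }
  assert (Hsub : incl (map xf (seq 0 (S B))) l).
  { intros x Hx. apply in_map_iff in Hx. destruct Hx as [j [<- Hj]]. apply in_seq in Hj.
    apply Hin. auto.
    rewrite (A_via_hit s t L (xf j) (B * P - j * P) e n HS (Hxin j) (Hhit j)) by (unfold n; nia).
    replace (n - (B * P - j * P))%nat with (k0 + j * P)%nat by (unfold n; nia).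
    apply (proj2 (Hper j k0 Hk0)). exact HA. }
  assert (Hnd2 : NoDup (map xf (seq 0 (S B)))).
  { apply nodup_map_seq. intros i j Hi Hj E.
    destruct (Nat.lt_total i j) as [l0|[l0|l0]]; auto; exfalso.
    -
      set (a := (B * P - i * P)%nat) in *. set (b := (B * P - j * P)%nat) in *.
      assert (Hab : (b < a)%nat) by (unfold a, b; nia).
      assert (E2 : iter b s (xf i) = iter b s (xf j)) by (rewrite E; auto).
      unfold xf in E2. fold a b in E2.
      rewrite (iter_s_sinv_le s t L b a) in E2 by (auto; apply He || lia).
      rewrite (iter_s_sinv s t L b e HS (proj1 He)) in E2.
      apply (Hr (a - b)%nat). lia. rewrite E2. exact He.
    - set (a := (B * P - j * P)%nat) in *. set (b := (B * P - i * P)%nat) in *.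
      assert (Hab : (b < a)%nat) by (unfold a, b; nia).
      assert (E2 : iter b s (xf j) = iter b s (xf i)) by (rewrite E; auto).
      unfold xf in E2. fold a b in E2.
      rewrite (iter_s_sinv_le s t L b a) in E2 by (auto; apply He || lia).
      rewrite (iter_s_sinv s t L b e HS (proj1 He)) in E2.
      apply (Hr (a - b)%nat). lia. rewrite E2. exact He. }
  pose proof (NoDup_incl_length Hnd2 Hsub). rewrite length_map, length_seq in H. lia.
Qed.

Lemma main_comb s t L B : Sys s t L -> Bnd s t B -> exists N, (1 <= N)%nat /\
  forall n, (1 <= n)%nat -> exists phi : R -> R,
  (forall x, in01 x -> Ap s t x N -> in01 (phi x) /\ Ap s t (phi x) (n * N)) /\
  (forall x y, in01 x -> Ap s t x N -> in01 y -> Ap s t y N -> phi x = phi y -> x = y) /\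
  (forall y, in01 y -> Ap s t y (n * N) -> exists x, in01 x /\ Ap s t x N /\ phi x = y).
Proof.
  intros HS HB.
  destruct (common_period s t L HS) as [K [P [HP Hper]]].
  destruct (Lmax_ex s t L HS) as [Lm HL].
  set (M := (K + Lm + 1)%nat). exists (P * M)%nat. split. unfold M; nia.
  intros n Hn. set (N := (P * M)%nat) in *. set (D := ((n - 1) * N)%nat).
  assert (HnN : (n * N = N + D)%nat) by (unfold D; nia).
  assert (HNM : (M <= N)%nat) by (unfold N; nia).
  set (phi := fun x => if excluded_middle_informative (exists k e, hit s t x k e /\ run_inf s t e)
                       then iter D (sinv s) x else x).
  assert (phi_inf : forall x k e, hit s t x k e -> run_inf s t e -> phi x = iter D (sinv s) x).
  { intros x k e Hh Hr. unfold phi. destruct excluded_middle_informative as [_|C]; auto.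
    exfalso. apply C. eauto. }
  assert (phi_fin : forall x k e, hit s t x k e -> ~ run_inf s t e -> phi x = x).
  { intros x k e Hh Hr. unfold phi. destruct excluded_middle_informative as [[k' [e' [Hh' Hr']]]|C]; auto.
    exfalso. destruct (hit_unique s t x k e k' e' Hh Hh') as [_ <-]. auto. }
  assert (fin_bound : forall x k e, in01 x -> hit s t x k e -> ~ run_inf s t e -> (k <= Lm)%nat).
  { intros x k e Hx Hh Hr. destruct (HL e (proj1 (proj2 Hh)) Hr) as [i [Hi HE]].
    pose proof (hit_bound s t L x k e i HS Hx Hh (proj1 Hi) HE). lia. }
  assert (Hsin := sinv_in s t L HS).
  assert (inf_hit : forall x k e, in01 x -> hit s t x k e -> run_inf s t e ->
            hit s t (iter D (sinv s) x) (D + k) e).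
  { intros x k e Hx Hh Hr. rewrite (hit_x s t L x k e HS Hx Hh). rewrite <- iter_add'.
    apply (hit_of_backrun s t L); auto. apply (proj1 (proj2 Hh)). intros j Hj. apply Hr. lia. }
  exists phi. split; [|split].
  - intros x Hx HA. destruct (A_hit s t L x N HS Hx HA) as [k [e [Hk Hh]]].
    pose proof (proj1 (proj2 Hh)) as He.
    destruct (classic (run_inf s t e)) as [Hr|Hr].
    + rewrite (phi_inf x k e Hh Hr). split. apply iter_in'; auto.
      rewrite (A_via_hit s t L _ (D + k) e (n * N) HS (iter_in' _ D x Hsin Hx) (inf_hit x k e Hx Hh Hr)) by lia.
      rewrite (A_via_hit s t L x k e N HS Hx Hh) in HA by lia.
      replace (n * N - (D + k))%nat with (N - k)%nat by lia. exact HA.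
    + rewrite (phi_fin x k e Hh Hr). split; auto.
      pose proof (fin_bound x k e Hx Hh Hr).
      rewrite (A_via_hit s t L x k e (n * N) HS Hx Hh) by lia.
      rewrite (A_via_hit s t L x k e N HS Hx Hh) in HA by lia.
      replace (n * N - k)%nat with ((N - k) + ((n - 1) * M) * P)%nat by (unfold N in *; nia).
      apply (proj2 (Hper e He ((n - 1) * M)%nat (N - k)%nat ltac:(lia))). exact HA.
  - intros x y Hx HAx Hy HAy Exy.
    destruct (A_hit s t L x N HS Hx HAx) as [k1 [e1 [Hk1 Hh1]]].
    destruct (A_hit s t L y N HS Hy HAy) as [k2 [e2 [Hk2 Hh2]]].
    destruct (classic (run_inf s t e1)) as [Hr1|Hr1];
    destruct (classic (run_inf s t e2)) as [Hr2|Hr2].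
    + rewrite (phi_inf x k1 e1 Hh1 Hr1), (phi_inf y k2 e2 Hh2 Hr2) in Exy.
      rewrite <- (iter_s_sinv s t L D x HS Hx), <- (iter_s_sinv s t L D y HS Hy), Exy. reflexivity.
    + exfalso. rewrite (phi_inf x k1 e1 Hh1 Hr1), (phi_fin y k2 e2 Hh2 Hr2) in Exy.
      pose proof (inf_hit x k1 e1 Hx Hh1 Hr1) as H1. rewrite Exy in H1.
      destruct (hit_unique s t y _ _ _ _ H1 Hh2) as [_ <-]. auto.
    + exfalso. rewrite (phi_fin x k1 e1 Hh1 Hr1), (phi_inf y k2 e2 Hh2 Hr2) in Exy.
      pose proof (inf_hit y k2 e2 Hy Hh2 Hr2) as H1. rewrite <- Exy in H1.
      destruct (hit_unique s t x _ _ _ _ H1 Hh1) as [_ <-]. auto.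
    + rewrite (phi_fin x k1 e1 Hh1 Hr1), (phi_fin y k2 e2 Hh2 Hr2) in Exy. exact Exy.
  - intros y Hy HA. destruct (A_hit s t L y (n * N) HS Hy HA) as [k [e [Hk Hh]]].
    pose proof (proj1 (proj2 Hh)) as He.
    pose proof HA as HA'.
    rewrite (A_via_hit s t L y k e (n * N) HS Hy Hh) in HA' by lia.
    destruct (classic (run_inf s t e)) as [Hr|Hr].
    + assert (Hlt : (n * N - k < K)%nat).
      { destruct (Nat.lt_ge_cases (n * N - k) K) as [l|l]; auto. exfalso.
        apply (ev_zero s t L B K P e HS HB HP He Hr (Hper e He) _ l HA'). }
      assert (HDk : (D <= k)%nat) by (unfold M in *; lia).
      set (x := iter D s y).
      assert (Hx : in01 x) by (apply iter_in'; auto; apply (s_in _ _ _ HS)).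
      assert (Hhx : hit s t x (k - D) e).
      { destruct Hh as [H1 [H2 H3]]. split; [|split]; auto.
        - unfold x. rewrite <- iter_add'. replace (k - D + D)%nat with k by lia. exact H1.
        - intros i Hi. unfold x. rewrite <- iter_add'. apply H3. lia. }
      exists x. split; auto. split.
      * rewrite (A_via_hit s t L x (k - D) e N HS Hx Hhx) by lia.
        replace (N - (k - D))%nat with (n * N - k)%nat by lia. exact HA'.
      * rewrite (phi_inf x (k - D)%nat e Hhx Hr). unfold x. apply (iter_sinv_s s t L); auto.
    + pose proof (fin_bound y k e Hy Hh Hr).
      exists y. split; auto. split.
      * rewrite (A_via_hit s t L y k e N HS Hy Hh) by lia.
        replace (n * N - k)%nat with ((N - k) + ((n - 1) * M) * P)%nat in HA' by (unfold N in *; nia).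
        apply (proj1 (Hper e He ((n - 1) * M)%nat (N - k)%nat ltac:(lia))). exact HA'.
      * apply (phi_fin y k e Hh Hr).
Qed.

Lemma transport (l : list R) (P Q : R -> Prop) (phi : R -> R) :
  NoDup l -> (forall x, In x l <-> P x) ->
  (forall x, P x -> Q (phi x)) ->
  (forall x y, P x -> P y -> phi x = phi y -> x = y) ->
  (forall y, Q y -> exists x, P x /\ phi x = y) ->
  NoDup (map phi l) /\ length (map phi l) = length l /\ forall y, In y (map phi l) <-> Q y.
Proof.
  intros Hnd Hl HPQ Hinj Hsur. split; [|split].
  - assert (G : forall l', NoDup l' -> (forall x, In x l' -> P x) -> NoDup (map phi l')).
    { induction l' as [|a l' IH]; intros Hn Hp; simpl. constructor.
      inversion Hn; subst. constructor.
      - intros Hin. apply in_map_iff in Hin. destruct Hin as [b [Eb Hb]].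
        assert (b = a) by (apply Hinj; auto; apply Hp; simpl; auto). subst. auto.
      - apply IH; auto. intros; apply Hp; simpl; auto. }
    apply G; auto. intros; apply Hl; auto.
  - apply length_map.
  - intros y. split.
    + intros Hy. apply in_map_iff in Hy. destruct Hy as [x [<- Hx]]. apply HPQ, Hl, Hx.
    + intros Hy. destruct (Hsur y Hy) as [x [Hx <-]]. apply in_map. apply Hl, Hx.
Qed.

Theorem lemma3p3 (f : R -> R) :
  IET f ->
  infinite_order f ->
  (exists B : nat, forall n : nat, exists m : nat,
      disc_count (iter n f) m /\ (m <= B)%nat) ->
  exists N : nat, (1 <= N)%nat /\ exists c : nat,
    forall n : nat, (1 <= n)%nat -> disc_count (iter (n * N) f) c.
Proof.
  intros HI _ [B HB].
  destruct (tau_exists f HI) as [tau [L [Htin [Hlg [HEL Hrg]]]]].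
  destruct HI as [[Hfin [Hinj Hsur]] _].
  assert (HS : Sys f tau L).
  { constructor; auto. }
  assert (Hdisc : forall n x, in01 x -> (~ circle_continuous_at (iter n f) x <-> Ap f tau x n)).
  { intros n x Hx. rewrite (disc_iff f tau n x); auto. unfold Ap. tauto. }
  assert (HBnd : Bnd f tau B).
  { intros n. destruct (HB n) as [m [[l [Hnd [Hlen Hin]]] Hm]].
    exists l. split; auto. split. lia. intros x Hx HA. apply Hin. split; auto.
    apply Hdisc; auto. }
  destruct (main_comb f tau L B HS HBnd) as [N [HN Hph]].
  exists N. split; auto.
  destruct (HB N) as [m [[l [Hnd [Hlen Hin]]] _]].
  exists m. intros n Hn. destruct (Hph n Hn) as [phi [H1 [H2 H3]]].
  destruct (transport l (fun x => in01 x /\ Ap f tau x N) (fun x => in01 x /\ Ap f tau x (n * N)) phi Hnd)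
    as [T1 [T2 T3]].
  - intros x. rewrite Hin. split; intros [Hx Hc]; split; auto; apply (Hdisc N x Hx); auto.
  - intros x [Hx HA]. apply H1; auto.
  - intros x y [Hx Hax] [Hy Hay]. apply H2; auto.
  - intros y [Hy HA]. destruct (H3 y Hy HA) as [x [Hx [HAx Ex]]]. exists x. auto.
  - exists (map phi l). split; auto. split. congruence.
    intros y. rewrite T3. split; intros [Hy Hc]; split; auto; apply (Hdisc (n * N)%nat y Hy); auto.
Qed.
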